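(* Let $q\ge 2$ and $n\ge 2$ be integers, with $n\ge 3$ if $q=2$. Then $\chi(H_q(n,2))=q^{n-1}$, and every proper $q^{n-1}$-coloring of $H_q(n,2)$ is even.
   Context: $\mathbb{Z}_q=\mathbb{Z}/q\mathbb{Z}$; for $x,y\in\mathbb{Z}_q^n$, $\mathrm{d}(x,y)=|\{i: x_i\neq y_i\}|$ is the Hamming distance. $H_q(n,d)$ is the simple undirected graph with vertex set $\mathbb{Z}_q^n$ in which $x,y$ are adjacent iff $\mathrm{d}(x,y)\ge d$. $\chi$ denotes the chromatic number. A coloring is called even if all its color classes have the same cardinality. *)

(* Defs.v *)
From mathcomp Require Import all_boot.
Set Implicit Arguments. Unset Strict Implicit. Unset Printing Implicit Defensive.

(* Vertices of H_q(n,d): words of length n over Z_q, modelled as 'I_q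
   (only equality of coordinates matters for Hamming distance). *)
Definition word (q n : nat) := {ffun 'I_n -> 'I_q}.

Definition hdist (q n : nat) (x y : word q n) : nat := #|[set i | x i != y i]|.

(* adjacency of H_q(n,d): x ~ y iff d(x,y) >= d  (simple graph: d >= 1 gives
   irreflexivity; for d = 2 this is automatic) *)
Definition Hadj (q n d : nat) (x y : word q n) : bool := (d <= hdist x y) && (x != y).

Definition proper_coloring (T : finType) (e : rel T) (k : nat) (c : T -> 'I_k) : Prop :=
  forall x y, e x y -> c x != c y.

Definition colorable (T : finType) (e : rel T) (k : nat) : Prop :=
  exists c : T -> 'I_k, proper_coloring e c.

Definition is_chromatic_number (T : finType) (e : rel T) (k : nat) : Prop :=
  colorable e k /\ forall m, colorable e m -> k <= m.

Definition even_coloring (T : finType) (k : nat) (c : T -> 'I_k) : Prop :=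
  forall a b : 'I_k, #|[set x | c x == a]| = #|[set x | c x == b]|.

(* Main.v *)
Require Import Defs.
From mathcomp Require Import all_boot.

Section H.
Variables q n : nat.
Implicit Types x y z : word q n.

Lemma hd_two x y i j : hdist x y <= 1 -> x i != y i -> x j != y j -> i = j.
Proof.
move=> h hi hj; apply/eqP; apply: contraTT h => nij.
rewrite -ltnNge /hdist.
have : [set i; j] \subset [set k | x k != y k].
  by apply/subsetP=> k; rewrite !inE => /orP[] /eqP->; rewrite ?hi ?hj.
by move/subset_leq_card; rewrite cards2 nij.
Qed.

Arguments hd_two [x y i j].
Lemma nadj_le1 x y : ~~ Hadj 2 x y -> hdist x y <= 1.
Proof.
rewrite /Hadj negb_and -ltnNge negbK => /orP[//|/eqP->].
rewrite /hdist; apply: (@leq_trans 0) => //; rewrite leqn0; apply/eqP/eqP; rewrite cards_eq0; apply/eqP/setP=> k; by rewrite !inE eqxx.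
Qed.

Lemma indep_le (A : {set word q n}) : 0 < q ->
  {in A &, forall x y, ~~ Hadj 2 x y} -> #|A| <= q.
Proof.
move=> q0 hA.
case: (leqP #|A| 1) => [h|]; first exact: leq_trans h q0.
case/card_gt1P=> x [y [xA yA nxy]].
have [i xyi] : exists i, x i != y i.
  apply/existsP; apply: contraNT nxy; rewrite negb_exists => /forallP h.
  by apply/eqP/ffunP=> k; move: (h k); rewrite negbK => /eqP.
have hxy := @nadj_le1 x y (hA _ _ xA yA).
have agree : forall z, z \in A -> forall j, j != i -> z j = x j.
  move=> z zA j nji; apply/eqP; apply/negPn/negP=> zj.
  have hxz := @nadj_le1 x z (hA _ _ xA zA).
  have hyz := @nadj_le1 y z (hA _ _ yA zA).
  have xyj : x j = y j.
    by apply/eqP; apply/negPn/negP=> h; move: nji; rewrite (hd_two hxy h xyi) eqxx.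
  have zi : x i = z i.
    apply/eqP; apply/negPn/negP=> h.
    have xzj : x j != z j by rewrite eq_sym.
    by move: nji; rewrite (hd_two hxz xzj h) eqxx.
  have yzj : y j != z j by rewrite -xyj eq_sym.
  have yzi : y i != z i by rewrite -zi eq_sym.
  by move: nji; rewrite (hd_two hyz yzj yzi) eqxx.
rewrite -(card_in_imset (f := fun z : word q n => z i)).
  by apply: leq_trans (max_card _) _; rewrite card_ord.
move=> z w zA wA /= ezw; apply/ffunP=> j.
case: (eqVneq j i) => [->//|nji].
by rewrite (agree _ zA _ nji) (agree _ wA _ nji).
Qed.

Lemma sum_classes k (c : word q n -> 'I_k) :
  \sum_(a < k) #|[set x | c x == a]| = q ^ n.
Proof.
have -> : q ^ n = #|word q n| by rewrite card_ffun !card_ord.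
rewrite -sum1_card (partition_big c xpredT) //=.
by apply: eq_bigr => a _; rewrite -sum1_card; apply: eq_bigl => x; rewrite inE.
Qed.

Lemma class_indep k (c : word q n -> 'I_k) a :
  proper_coloring (@Hadj q n 2) c ->
  {in [set x | c x == a] &, forall x y, ~~ Hadj 2 x y}.
Proof.
move=> pc x y; rewrite !inE => /eqP cx /eqP cy; apply/negP=> /pc.
by rewrite cx cy eqxx.
Qed.

Lemma class_le k (c : word q n -> 'I_k) a : 0 < q ->
  proper_coloring (@Hadj q n 2) c -> #|[set x | c x == a]| <= q.
Proof. move=> q0 pc; apply: indep_le q0 _ => x y; rewrite !inE => /eqP cx /eqP cy; apply/negP=> /pc; by rewrite cx cy eqxx. Qed.
End H.

Local Notation pref q m := {ffun 'I_m -> 'I_q}.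

Theorem proposition3p6 (q n : nat) :
  2 <= q -> 2 <= n -> (q = 2 -> 3 <= n) ->
  is_chromatic_number (@Hadj q n 2) (q ^ n.-1) /\
  (forall c : word q n -> 'I_(q ^ n.-1),
      proper_coloring (@Hadj q n 2) c -> even_coloring c).
Proof.
move=> q2 n2 _.
have q0 : 0 < q by apply: leq_trans q2.
have qn : q ^ n = q ^ n.-1 * q by rewrite -expnSr prednK // (leq_trans _ n2).
have tot : forall k (c : word q n -> 'I_k), proper_coloring (@Hadj q n 2) c ->
    q ^ n <= k * q.
  move=> k c pc; rewrite -(@sum_classes q n k c).
  have -> : k * q = \sum_(a < k) q by rewrite sum_nat_const card_ord.
  by apply: leq_sum => a _; apply: class_le.
split; first split.
  have e : #|(pref q n.-1)| = q ^ n.-1 by rewrite card_ffun !card_ord.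
  have le : n.-1 <= n by apply: leq_pred.
  pose r (x : word q n) : (pref q n.-1) := [ffun j => x (widen_ord le j)].
  exists (fun x => cast_ord e (enum_rank (r x))).
  move=> x y; apply: contraTN => /eqP /cast_ord_inj /enum_rank_inj rxy.
  rewrite /Hadj negb_and -ltnNge; apply/orP; left.
  apply/card_le1P => i; rewrite inE => xyi j; rewrite inE.
  have lasti : forall i : 'I_n, x i != y i -> val i = n.-1.
    move=> i' h; apply/eqP; rewrite eqn_leq -ltnS prednK ?ltn_ord ?(leq_trans _ n2) //=.
    rewrite leqNgt; apply: contraNN h => lt.
    have := congr1 (fun f : (pref q n.-1) => f (Ordinal lt)) rxy; rewrite !ffunE /=.
    have E : widen_ord le (Ordinal lt) = i' by apply: val_inj.
    by rewrite E => ->.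
  apply/idP/idP => [h|/eqP ->//]; apply/eqP/val_inj.
  by rewrite (lasti _ h) (lasti _ xyi).
- move=> m [c pc]; have := tot _ _ pc.
  by rewrite qn leq_pmul2r.
- move=> c pc.
  have eq : forall a, #|[set x | c x == a]| = q.
    move=> a; apply/eqP; rewrite eqn_leq class_le //=.
    rewrite leqNgt; apply/negP => lt.
    have := @sum_classes q n _ c; rewrite (bigD1 a) //= qn => hs.
    have kpos : 0 < q ^ n.-1 by rewrite expn_gt0 q0.
    have hS : \sum_(i < q ^ n.-1 | i != a) #|[set x | c x == i]| <= (q ^ n.-1).-1 * q.
      apply: (@leq_trans (\sum_(i < q ^ n.-1 | i != a) q)).
        by apply: leq_sum => b _; apply: class_le.
      by rewrite sum_nat_const cardC1 card_ord.
    have := leq_add lt hS.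
    by rewrite -mulSn prednK // -hs addSn ltnn.
  by move=> a b; rewrite !eq.
Qed.
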